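(* Let the system have Hilbert-space dimension $d$. Let $\mathcal G$ be a set of unitary gates, containing the identity, that is universal (every unitary on the $d$-dimensional space is a limit of finite products of elements of $\mathcal G$), and let $C_{\mathcal G}(U)=\min\{r\in\mathbb N: U=U_r\cdots U_1,\ U_j\in\mathcal G\}$ (infinite if no such finite product exists). Let $\mathcal P$ be a set of projectors containing $\mathbb 1$ and at least one rank-1 projector, and let $\mathcal M^r=\{U^\dagger PU: P\in\mathcal P,\ C_{\mathcal G}(U)\le r\}$, $\mathcal M^\infty=\overline{\bigcup_{r\ge0}\mathcal M^r}$. Let $\mathcal X=\{\log\operatorname{tr}P: P\in\mathcal P\}\subseteq[0,\log d]$ and $q=\sup\{b-a: (a,b)\subseteq[0,\log d]\setminus\mathcal X\}$. Then $\mathcal M^\infty$ is $q$-quasiuniversal with respect to $\mathbb 1$.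
   Context: Natural logarithms; POVM effect = operator $0\le Q\le\mathbb 1$; $\overline{\,\cdot\,}$ is topological closure. A set $\mathcal M^\infty$ of POVM effects is $q$-quasiuniversal with respect to a positive semidefinite $\Gamma$ if for every POVM effect $Q$ with $\|Q\|_\infty=1$ and every $g\in(0,1)$ there exist $\tilde Q,\tilde Q'\in\mathcal M^\infty$ with $g\tilde Q\le Q\le(1-g)\tilde Q'+g\mathbb 1$ and $\log\operatorname{tr}(\tilde Q'\Gamma)-\log\operatorname{tr}(\tilde Q\Gamma)\le q$. *)

(* Defs.v *)
From HB Require Import structures.
From mathcomp Require Import all_boot all_order all_algebra.
From mathcomp Require Import all_classical all_reals all_analysis.
From mathcomp.real_closed Require Import complex.
Set Implicit Arguments. Unset Strict Implicit. Unset Printing Implicit Defensive.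
Import Order.TTheory GRing.Theory Num.Theory.
Local Open Scope ring_scope.
Local Open Scope classical_set_scope.

Section Defs.
Variable R : realType.
Local Notation C := R[i].

Definition adj (m n : nat) (A : 'M[C]_(m, n)) : 'M[C]_(n, m) :=
  (map_mx (@conjc R) A)^T.

Definition unitary d (U : 'M[C]_d) : Prop := adj U *m U = 1%:M.

Definition projector d (P : 'M[C]_d) : Prop := P *m P = P /\ adj P = P.

(* positive semidefinite: Hermitian with nonnegative quadratic form
   (the order on C is the usual partial order: 0 <= z iff z is real and >= 0) *)
Definition psd d (A : 'M[C]_d) : Prop :=
  adj A = A /\ forall x : 'cV[C]_d, 0 <= (adj x *m A *m x) 0 0.

Definition loewner d (A B : 'M[C]_d) : Prop := psd (B - A).

Definition effect d (Q : 'M[C]_d) : Prop := psd Q /\ loewner Q 1%:M.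

Definition vnorm d (x : 'cV[C]_d) : R := Num.sqrt (complex.Re ((adj x *m x) 0 0)).

Definition opnorm d (Q : 'M[C]_d) : R :=
  sup [set vnorm (Q *m x) | x in [set x : 'cV[C]_d | vnorm x = 1]].

(* topological closure of a set of matrices (entrywise topology = any norm
   topology in finite dimension) *)
Definition mx_closure d (S : set 'M[C]_d) : set 'M[C]_d :=
  [set M | forall e : R, 0 < e ->
     exists2 N, S N & forall i j, `|M i j - N i j| < e%:C%C].

(* product U_r ... U_1 of a word [:: U_r; ...; U_1] *)
Definition wprod d (w : seq 'M[C]_d) : 'M[C]_d := foldr mulmx 1%:M w.

Definition cost_le d (G : set 'M[C]_d) (U : 'M[C]_d) (r : nat) : Prop :=
  exists w : seq 'M[C]_d, [/\ (size w <= r)%N, (forall V, V \in w -> G V) &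
                              U = wprod w].

Definition universal d (G : set 'M[C]_d) : Prop :=
  forall U, unitary U ->
    mx_closure [set wprod w | w in [set w : seq 'M[C]_d | forall V, V \in w -> G V]] U.

Definition Mr d (G : set 'M[C]_d) (Ps : set 'M[C]_d) (r : nat) : set 'M[C]_d :=
  [set M | exists P U, [/\ Ps P, cost_le G U r & M = adj U *m P *m U]].

Definition Minf d (G : set 'M[C]_d) (Ps : set 'M[C]_d) : set 'M[C]_d :=
  mx_closure (\bigcup_(r in [set: nat]) Mr G Ps r).

Definition logtr_set d (Ps : set 'M[C]_d) : set R :=
  [set ln (complex.Re (\tr P)) | P in Ps].

Definition gap d (Ps : set 'M[C]_d) : R :=
  sup [set z : R | exists a b : R, z = b - a /\ (forall x, a < x < b ->
          (0 <= x <= ln (d%:R : R)) /\ ~ logtr_set Ps x)].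

(* q-quasiuniversality w.r.t. Gamma.  log 0 = -oo in the paper, so the
   trace of tilde Q (in the subtracted log) must be positive. *)
Definition quasiuniversal d (q : R) (Minf : set 'M[C]_d) (Gamma : 'M[C]_d) : Prop :=
  forall Q, effect Q -> opnorm Q = 1 ->
  forall g : R, 0 < g < 1 ->
  exists Qt Qt', [/\ Minf Qt /\ Minf Qt',
     loewner (g%:C%C *: Qt) Q,
     loewner Q ((1 - g)%:C%C *: Qt' + g%:C%C *: 1%:M),
     0 < complex.Re (\tr (Qt *m Gamma)) &
     ln (complex.Re (\tr (Qt' *m Gamma))) - ln (complex.Re (\tr (Qt *m Gamma))) <= q].

End Defs.

(* Main.v *)
Require Import Defs.
From HB Require Import structures.
From mathcomp Require Import all_boot all_order all_algebra.
From mathcomp Require Import all_classical all_reals all_analysis.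
From mathcomp.real_closed Require Import complex.
From mathcomp Require Import fingroup perm.
Set Implicit Arguments. Unset Strict Implicit. Unset Printing Implicit Defensive.
Import Order.TTheory GRing.Theory Num.Theory.
Local Open Scope ring_scope.
Local Open Scope classical_set_scope.
Lemma conjcE (R : realType) (x : R[i]) : conjc x = Num.conj_op x.
Proof. by case: x. Qed.

Lemma adjE (R : realType) m n (A : 'M[R[i]]_(m, n)) :
  adj A = map_mx Num.conj_op A^T.
Proof. by apply/matrixP => i j; rewrite !mxE conjcE. Qed.

Lemma adjM (R : realType) m n p (A : 'M[R[i]]_(m, n)) (B : 'M[R[i]]_(n, p)) :
  adj (A *m B) = adj B *m adj A.
Proof. by rewrite !adjE trmx_mul map_mxM. Qed.

Lemma adjK (R : realType) m n (A : 'M[R[i]]_(m, n)) : adj (adj A) = A.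
Proof. by apply/matrixP => i j; rewrite !adjE !mxE conjCK. Qed.

Lemma adjD (R : realType) m n (A B : 'M[R[i]]_(m, n)) : adj (A + B) = adj A + adj B.
Proof. by apply/matrixP => i j; rewrite !adjE !mxE rmorphD. Qed.

Lemma adjB (R : realType) m n (A B : 'M[R[i]]_(m, n)) : adj (A - B) = adj A - adj B.
Proof. by apply/matrixP => i j; rewrite !adjE !mxE rmorphB. Qed.

Lemma adj_entry (R : realType) m n (A : 'M[R[i]]_(m, n)) i j :
  adj A i j = Num.conj_op (A j i).
Proof. by rewrite adjE !mxE. Qed.

Lemma adj_diag (R : realType) n (v : 'rV[R[i]]_n) :
  (forall i, v 0 i \is Num.real) -> adj (diag_mx v) = diag_mx v.
Proof.
move=> hv; apply/matrixP => i j; rewrite adj_entry !mxE.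
case: (eqVneq i j) => [->|nij]; first by rewrite !mulr1n conj_Creal.
by rewrite !mulr0n conjC0.
Qed.

Lemma unitarymx_adj (R : realType) n (S : 'M[R[i]]_n) :
  S \is unitarymx -> S *m adj S = 1%:M /\ adj S *m S = 1%:M.
Proof.
move=> /unitarymxP; rewrite -adjE => h; split => //; exact: mulmx1C.
Qed.

Lemma unitary_adj (R : realType) n (S : 'M[R[i]]_n) :
  unitary S -> S *m adj S = 1%:M.
Proof. by move=> h; apply: mulmx1C. Qed.

Definition cdiag (R : realType) n (S : 'M[R[i]]_n) (v : 'rV[R[i]]_n) :=
  adj S *m diag_mx v *m S.

Lemma cdiagB (R : realType) n (S : 'M[R[i]]_n) v w :
  cdiag S v - cdiag S w = cdiag S (v - w).
Proof. by rewrite /cdiag linearB /= mulmxBr mulmxBl. Qed.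

Lemma cdiagD (R : realType) n (S : 'M[R[i]]_n) v w :
  cdiag S v + cdiag S w = cdiag S (v + w).
Proof. by rewrite /cdiag linearD /= mulmxDr mulmxDl. Qed.

Lemma cdiagZ (R : realType) n (S : 'M[R[i]]_n) (a : R[i]) v :
  a *: cdiag S v = cdiag S (a *: v).
Proof. by rewrite /cdiag linearZ /= -scalemxAr -scalemxAl. Qed.

Lemma cdiag1 (R : realType) n (S : 'M[R[i]]_n) :
  adj S *m S = 1%:M -> cdiag S (const_mx 1) = 1%:M.
Proof. by move=> h; rewrite /cdiag diag_const_mx mulmx1. Qed.

Lemma psd_cdiag (R : realType) n (S : 'M[R[i]]_n) (v : 'rV[R[i]]_n) :
  (forall i, 0 <= v 0 i) -> psd (cdiag S v).
Proof.
move=> hv; split.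
  rewrite /cdiag !adjM adjK adj_diag ?mulmxA // => i; exact: ger0_real.
move=> x; rewrite /cdiag -!mulmxA mulmxA -adjM.
set y := S *m x; rewrite mulmxA mul_mx_diag mxE.
apply: sumr_ge0 => i _; rewrite !mxE.
rewrite conjcE mulrAC; apply: mulr_ge0 => //; rewrite mulrC; exact: mul_conjC_ge0.
Qed.
Lemma herm_decomp (R : realType) n (A : 'M[R[i]]_n) : adj A = A ->
  exists (S : 'M[R[i]]_n) (v : 'rV[R[i]]_n), [/\ S *m adj S = 1%:M, adj S *m S = 1%:M,
    (forall i, v 0 i \is Num.real) & A = cdiag S v].
Proof.
move=> hA.
have hn : A \is normalmx by apply/eqP; rewrite -adjE hA.
have /orthomx_spectralP hdec := hn.
have hU : spectralmx A \is unitarymx := spectral_unitarymx A.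
move: hdec hU; set S := spectralmx A; set v := spectral_diag A => hdec hU.
have [hS1 hS2] := unitarymx_adj hU.
have eA : A = cdiag S v.
  by rewrite /cdiag {1}hdec (invmx_unitary hU) -adjE.
clearbody S v.
exists S, v; split => // i.
have hD : diag_mx v = S *m A *m adj S.
  by rewrite eA /cdiag !mulmxA hS1 mul1mx -mulmxA hS1 mulmx1.
have : adj (diag_mx v) = diag_mx v by rewrite hD !adjM adjK hA mulmxA.
move=> /matrixP /(_ i i); rewrite adj_entry !mxE eqxx !mulr1n => h.
by apply/CrealP.
Qed.
Lemma adj_delta (R : realType) n (i : 'I_n) :
  adj (delta_mx i 0 : 'cV[R[i]]_n) = delta_mx 0 i.
Proof.
apply/matrixP => a b; rewrite adj_entry !mxE.
by rewrite conjC_nat andbC.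
Qed.

Lemma cdiag_quad (R : realType) n (S : 'M[R[i]]_n) (v : 'rV[R[i]]_n) i :
  S *m adj S = 1%:M ->
  let e := (delta_mx i 0 : 'cV[R[i]]_n) in
  (adj (adj S *m e) *m cdiag S v *m (adj S *m e)) 0 0 = v 0 i.
Proof.
move=> hS e; rewrite /e adjM adjK adj_delta /cdiag.
rewrite !mulmxA -(mulmxA _ S) hS mulmx1 -(mulmxA _ S) hS mulmx1.
by rewrite -rowE -colE !mxE eqxx mulr1n.
Qed.

Lemma quad_adj_ge0 (R : realType) n (x : 'cV[R[i]]_n) : 0 <= (adj x *m x) 0 0.
Proof.
rewrite mxE; apply: sumr_ge0 => j _; rewrite adj_entry mulrC; exact: mul_conjC_ge0.
Qed.

Lemma eig_bounds (R : realType) n (S : 'M[R[i]]_n) (v : 'rV[R[i]]_n) :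
  S *m adj S = 1%:M -> adj S *m S = 1%:M -> effect (cdiag S v) ->
  forall i, 0 <= v 0 i /\ v 0 i <= 1.
Proof.
move=> h1 h2 [[_ hq] hl] i; split.
  by have := hq (adj S *m delta_mx i 0); rewrite cdiag_quad.
move: hl => [_ /(_ (adj S *m delta_mx i 0))].
by rewrite -(cdiag1 h2) cdiagB cdiag_quad // !mxE subr_ge0.
Qed.

Lemma mxBE (R : realType) m n (A B : 'M[R[i]]_(m, n)) i j :
  (A - B) i j = A i j - B i j.
Proof. by rewrite !mxE. Qed.

Lemma quadB (R : realType) n (x : 'cV[R[i]]_n) (A B : 'M[R[i]]_n) :
  (adj x *m (A - B) *m x) 0 0 = (adj x *m A *m x) 0 0 - (adj x *m B *m x) 0 0.
Proof. by rewrite mulmxBr mulmxBl mxBE. Qed.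

Lemma quadZ1 (R : realType) n (x : 'cV[R[i]]_n) (k : R[i]) :
  (adj x *m (k *: 1%:M) *m x) 0 0 = k * (adj x *m x) 0 0.
Proof. by rewrite -scalemxAr mulmx1 -scalemxAl mxE. Qed.
Lemma cdiag_sq (R : realType) n (S : 'M[R[i]]_n) (v : 'rV[R[i]]_n) :
  S *m adj S = 1%:M ->
  cdiag S v *m cdiag S v = cdiag S (\row_j (v 0 j * v 0 j)).
Proof.
move=> h; rewrite /cdiag -mulmx_diag !mulmxA; congr (_ *m _).
by rewrite -(mulmxA _ S) h mulmx1.
Qed.

Lemma opnorm_le (R : realType) n (S : 'M[R[i]]_n) (v : 'rV[R[i]]_n) (c : R) :
  S *m adj S = 1%:M -> adj S *m S = 1%:M -> 0 <= c ->
  (forall i, 0 <= v 0 i /\ v 0 i <= c%:C%C) -> opnorm (cdiag S v) <= c.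
Proof.
move=> h1 h2 c0 hv; rewrite /opnorm.
set E := [set _ | _ in _].
have [->|ne] := eqVneq E set0; first by rewrite sup0.
apply: ge_sup; first by apply/set0P.
move=> y [x /= hx <-].
set Q := cdiag S v.
have hQ : adj Q = Q.
  by have [] := psd_cdiag S (fun i => (hv i).1).
have hpsd : psd (cdiag S (\row_j ((c%:C%C)^+2 - v 0 j * v 0 j))).
  apply: psd_cdiag => i; rewrite !mxE subr_ge0 expr2.
  by have [a b] := hv i; apply: ler_pM.
move: hpsd => [_ /(_ x)].
have -> : \row_j ((c%:C%C)^+2 - v 0 j * v 0 j) =
   \row_j (c%:C%C ^+ 2) - \row_j (v 0 j * v 0 j) :> 'rV[R[i]]_n.
  by apply/matrixP => a b; rewrite !mxE.
rewrite -cdiagB.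
rewrite -cdiag_sq // -/Q.
have -> : \row_j (c%:C%C ^+2) = (c%:C%C ^+ 2) *: (const_mx 1 : 'rV[R[i]]_n).
  by apply/matrixP => a b; rewrite !mxE mulr1.
rewrite -cdiagZ cdiag1 //.
rewrite quadB quadZ1.
rewrite -{1}hQ mulmxA -adjM -mulmxA subr_ge0 => hle.
move: hx; rewrite /vnorm => hx.
have hx1 : complex.Re ((adj x *m x) 0 0) = 1.
  have h0 : 0 <= complex.Re ((adj x *m x) 0 0).
    by have := quad_adj_ge0 x; rewrite lecE => /andP[_]; rewrite /=.
  by rewrite -(sqr_sqrtr h0) hx expr1n.
have : complex.Re ((adj (Q *m x) *m (Q *m x)) 0 0) <= c ^+ 2.
  move: hle; rewrite lecE => /andP[_].
  set z := (adj x *m x) 0 0.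
  have -> : complex.Re ((c%:C%C ^+ 2) * z) = c ^+ 2 * complex.Re z.
    by rewrite -rmorphXn; case: z => a b /=; rewrite !mul0r subr0.
  by rewrite hx1 mulr1.
move=> h; rewrite -(ger0_norm c0) -sqrtr_sqr.
by apply: ler_wsqrtr.
Qed.
Lemma exists_big_eig (R : realType) n (S : 'M[R[i]]_n) (v : 'rV[R[i]]_n) (g : R) :
  S *m adj S = 1%:M -> adj S *m S = 1%:M -> effect (cdiag S v) ->
  opnorm (cdiag S v) = 1 -> 0 < g < 1 -> exists i, g%:C%C <= v 0 i.
Proof.
move=> h1 h2 he hn /andP[g0 g1].
apply: contrapT => hne.
have hb := eig_bounds h1 h2 he.
have : opnorm (cdiag S v) <= g.
  apply: opnorm_le => //; first exact: ltW.
  move=> i; split; first exact: (hb i).1.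
  have hr : v 0 i \is Num.real := ger0_real (hb i).1.
  have hg : (g%:C%C : R[i]) \is Num.real by apply: ger0_real; rewrite ler0c ltW.
  rewrite (real_leNgt hr hg); apply/negP => /ltW hgi; apply: hne; by exists i.
by rewrite hn => /(lt_le_trans g1); rewrite ltxx.
Qed.
Local Close Scope classical_set_scope.
Lemma subset_card (T : finType) (L : {set T}) k :
  (k <= #|L|)%N -> exists A : {set T}, A \subset L /\ #|A| = k.
Proof.
move=> hk; exists [set x in take k (enum L)]; split.
  by apply/fintype.subsetP => x; rewrite inE => /mem_take; rewrite mem_enum.
rewrite cardsE; have/card_uniqP -> : uniq (take k (enum L)).
  by apply: take_uniq; exact: enum_uniq.
by rewrite size_takel // -cardE.
Qed.

Lemma superset_card (T : finType) (L : {set T}) k :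
  (#|L| <= k)%N -> (k <= #|T|)%N -> exists A : {set T}, L \subset A /\ #|A| = k.
Proof.
move=> h1 h2.
have hc : (#|T| - k <= #|~: L|)%N.
  by rewrite -(cardsC L) leq_subLR leq_add2r.
have [X [hX cX]] := subset_card hc.
exists (~: X); split.
  apply/fintype.subsetP => x xL; rewrite inE; apply/negP => xX.
  by move/fintype.subsetP: hX => /(_ x xX); rewrite inE xL.
by rewrite cardsCs finset.setCK cX subKn.
Qed.

Lemma perm_sets (T : finType) (A B : {set T}) :
  #|A| = #|B| -> exists s : {perm T}, forall x, (s x \in B) = (x \in A).
Proof.
move=> hAB.
pose e1 := enum A ++ enum (~: A); pose e2 := enum B ++ enum (~: B).
have u2 : uniq e2.
  rewrite cat_uniq !enum_uniq andbT /=; apply/hasPn => x.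
  by rewrite !mem_enum inE.
have m1 : forall x, x \in e1 by move=> x; rewrite mem_cat !mem_enum inE orbN.
have s1 : size e1 = #|T| by rewrite size_cat -!cardE cardsC.
have s2 : size e2 = #|T| by rewrite size_cat -!cardE cardsC.
pose f x := nth x e2 (index x e1).
have lt1 : forall x, (index x e1 < #|T|)%N by move=> x; rewrite -s1 index_mem.
have finj : injective f.
  move=> x y; rewrite /f (set_nth_default y x); last by rewrite s2.
  move/eqP; rewrite nth_uniq ?s2 // => /eqP hi.
  by rewrite -(nth_index x (m1 x)) hi (set_nth_default y x) ?s1 // nth_index.
exists (perm finj) => x; rewrite permE /f.
have hA : (x \in A) = (index x e1 < #|A|)%N.
  rewrite /e1 index_cat mem_enum; case: ifP => xA.
    by rewrite cardE index_mem mem_enum xA.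
  by rewrite -cardE ltnNge leq_addr.
rewrite hA hAB nth_cat -cardE.
case: ifP => hlt.
  by rewrite -mem_enum mem_nth // -cardE.
have : (index x e1 - #|B| < size (enum (~: B)))%N.
  by rewrite -cardE ltn_subLR ?cardsC // leqNgt hlt.
by move=> /(mem_nth x); rewrite mem_enum inE => /negbTE ->.
Qed.
Local Open Scope classical_set_scope.
Local Close Scope classical_set_scope.
Definition ind (R : realType) n (B : {set 'I_n}) : 'rV[R[i]]_n :=
  \row_j ((j \in B)%:R).

Lemma cdiag_inj (R : realType) n (S : 'M[R[i]]_n) (v w : 'rV[R[i]]_n) :
  S *m adj S = 1%:M -> cdiag S v = cdiag S w -> v = w.
Proof.
move=> h e.
have k : forall u, S *m cdiag S u *m adj S = diag_mx u.
  by move=> u; rewrite /cdiag !mulmxA h mul1mx -mulmxA h mulmx1.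
have := k v; rewrite e k => /matrixP hd.
apply/matrixP => a j; rewrite ord1; have := hd j j; rewrite !mxE eqxx !mulr1n.
by move=> ->.
Qed.

Lemma proj_decomp (R : realType) n (P : 'M[R[i]]_n) : projector P ->
  exists (V : 'M[R[i]]_n) (B : {set 'I_n}),
    [/\ V *m adj V = 1%:M, adj V *m V = 1%:M & P = cdiag V (ind R B)].
Proof.
move=> [hPP hPa]; have [S [v [h1 h2 hr hP]]] := herm_decomp hPa.
exists S, [set j | v 0 j == 1]; split => //.
have : cdiag S (\row_j (v 0 j * v 0 j)) = cdiag S v by rewrite -cdiag_sq // -hP.
move=> /(cdiag_inj h1) /matrixP hv.
rewrite hP; congr cdiag; apply/matrixP => a j; rewrite ord1 !mxE inE.
have := hv 0 j; rewrite !mxE => hj.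
case: eqP => [//|ne].
have : v 0 j * (v 0 j - 1) = 0 by rewrite mulrBr mulr1 hj subrr.
by move/eqP; rewrite mulf_eq0 subr_eq0 => /orP[/eqP ->|/eqP].
Qed.

Lemma adj_perm (R : realType) n (s : {perm 'I_n}) :
  adj (perm_mx s^-1 : 'M[R[i]]_n) = perm_mx s.
Proof.
rewrite adjE tr_perm_mx invgK; apply/matrixP => i j.
by rewrite !mxE conjC_nat.
Qed.

Lemma conj_equiv (R : realType) n (S V : 'M[R[i]]_n) (A B : {set 'I_n}) :
  S *m adj S = 1%:M -> adj S *m S = 1%:M ->
  V *m adj V = 1%:M -> adj V *m V = 1%:M -> #|A| = #|B| ->
  exists U : 'M[R[i]]_n, unitary U /\
     adj U *m cdiag V (ind R B) *m U = cdiag S (ind R A).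
Proof.
move=> hS1 hS2 hV1 hV2 hAB.
have [s hs] := perm_sets hAB.
pose T : 'M[R[i]]_n := perm_mx s^-1.
have hT : adj T *m T = 1%:M by rewrite adj_perm -perm_mxM mulgV perm_mx1.
have hD : adj T *m diag_mx (ind R B) *m T = diag_mx (ind R A).
  rewrite adj_perm -row_permE /T -col_permE.
  apply/matrixP => i j; rewrite !mxE hs (inj_eq (@perm_inj _ s)).
  by [].
exists (adj V *m T *m S); split.
  rewrite /unitary !adjM adjK !mulmxA -(mulmxA _ V) hV1 mulmx1.
  by rewrite -(mulmxA _ (adj T)) hT mulmx1.
rewrite !adjM adjK /cdiag !mulmxA -(mulmxA _ V) hV1 mulmx1.
rewrite -(mulmxA _ V) hV1 mulmx1.
by rewrite -hD !mulmxA.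
Qed.
Local Open Scope classical_set_scope.
Local Close Scope classical_set_scope.
Lemma card_init n k : (k <= n)%N -> #|[set j : 'I_n | (j < k)%N]| = k.
Proof.
move=> hk.
have -> : [set j : 'I_n | (j < k)%N] = (widen_ord hk) @: [set: 'I_k].
  apply/setP => j; rewrite inE; apply/idP/imsetP => [jk|[a _ ->]] //.
  by exists (Ordinal jk) => //; apply: val_inj.
  by rewrite /= ltn_ord.
have hi : injective (widen_ord hk) by move=> a b /(congr1 val) /= /val_inj.
exact: (etrans (card_imset _ hi) (etrans (cardsT _) (card_ord k))).
Qed.

Lemma rank_conj (R : realType) n (U X W : 'M[R[i]]_n) :
  U \in unitmx -> W \in unitmx -> \rank (U *m X *m W) = \rank X.
Proof.
move=> hU hW; rewrite mxrankMfree ?row_free_unit //.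
apply/eqP; rewrite eqn_leq mxrankM_maxr /=.
by rewrite -{1}(mulKmx hU X) mxrankM_maxr.
Qed.

Lemma diag_ind_init (R : realType) n k :
  diag_mx (ind R [set j : 'I_n | (j < k)%N]) = pid_mx k.
Proof.
apply/matrixP => i j; rewrite !mxE inE.
case: (eqVneq i j) => [->|nij]; rewrite ?eqxx ?mulr1n //.
have nij2 : (nat_of_ord i == nat_of_ord j) = false by apply/negbTE; exact: nij.
by rewrite mulr0n nij2.

Qed.

Lemma rank_cdiag (R : realType) n (V : 'M[R[i]]_n) (B : {set 'I_n}) :
  V *m adj V = 1%:M -> adj V *m V = 1%:M -> \rank (cdiag V (ind R B)) = #|B|.
Proof.
move=> h1 h2.
have hk : (#|B| <= n)%N by have := max_card (mem B); rewrite card_ord.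
have a1 : (1%:M : 'M[R[i]]_n) *m adj 1%:M = 1%:M.
  by rewrite /adj map_mx1 trmx1 mulmx1.
have a2 : adj (1%:M : 'M[R[i]]_n) *m 1%:M = 1%:M.
  by rewrite /adj map_mx1 trmx1 mulmx1.
have [U [hU e]] := @conj_equiv R n 1%:M V [set j : 'I_n | (j < #|B|)%N] B
  a1 a2 h1 h2 (card_init hk).
have [u1 u2] := mulmx1_unit hU.
rewrite -(rank_conj (cdiag V (ind R B)) u1 u2) e /cdiag.
rewrite /adj map_mx1 trmx1 mul1mx mulmx1 diag_ind_init rank_pid_mx //.
Qed.

Lemma tr_cdiag (R : realType) n (V : 'M[R[i]]_n) (B : {set 'I_n}) :
  V *m adj V = 1%:M -> complex.Re (\tr (cdiag V (ind R B))) = #|B|%:R.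
Proof.
move=> h; rewrite /cdiag mxtrace_mulC mulmxA h mul1mx mxtrace_diag.
rewrite (eq_bigr (fun j => if j \in B then 1 else 0)); last first.
  by move=> j _; rewrite mxE; case: (j \in B).
rewrite -big_mkcond /= sumr_const.
by rewrite -(rmorph_nat (@real_complex R)).
Qed.
Local Open Scope classical_set_scope.
From mathcomp.algebra_tactics Require Import ring lra.
Import ComplexField.Normc.

Lemma normcC (R : realType) (z : R[i]) : `|z| = (normc z)%:C%C.
Proof. by case: z => a b; rewrite normc_def. Qed.

Lemma normc_ge0 (R : realType) (z : R[i]) : 0 <= normc z.
Proof. by case: z => a b /=; apply: sqrtr_ge0. Qed.

Lemma normcJ' (R : realType) (z : R[i]) : normc (Num.conj_op z) = normc z.
Proof. by apply: complexI; rewrite -!normcC -conjcE normcJ. Qed.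

Lemma normc_sum (R : realType) (I : finType) (F : I -> R[i]) :
  normc (\sum_i F i) <= \sum_i normc (F i).
Proof.
elim/big_rec2: _ => [|i y x _ h]; first by rewrite normc0.
by apply: le_trans (le_normcD _ _) _; rewrite lerD2l.
Qed.

Lemma le_sum_term (R : realType) (I : finType) (F : I -> R) i0 :
  (forall i, 0 <= F i) -> F i0 <= \sum_i F i.
Proof. by move=> h; rewrite (bigD1 i0) //= lerDl sumr_ge0. Qed.

Lemma normcB_le (R : realType) (a b : R[i]) : normc a <= normc b + normc (a - b).
Proof.
have e : a = b + (a - b) by rewrite addrC subrK.
by rewrite {1}e; apply: le_normcD.
Qed.
Lemma entry_expand (R : realType) n (P W : 'M[R[i]]_n) i j :
  (adj W *m P *m W) i j =
  \sum_l \sum_k Num.conj_op (W k i) * P k l * W l j.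
Proof.
rewrite mxE; apply: eq_bigr => l _; rewrite mxE mulr_suml.
by apply: eq_bigr => k _; rewrite adj_entry.
Qed.

Lemma conj_cont (R : realType) n (U P : 'M[R[i]]_n) (e : R) : 0 < e ->
  exists2 dl : R, 0 < dl & forall W : 'M[R[i]]_n,
    (forall i j, `|U i j - W i j| < dl%:C%C) ->
    forall i j, `|(adj U *m P *m U) i j - (adj W *m P *m W) i j| < e%:C%C.
Proof.
move=> e0.
pose S : R := \sum_i \sum_j (normc (U i j) + normc (P i j)).
have S0 : 0 <= S.
  by apply: sumr_ge0 => i _; apply: sumr_ge0 => j _; rewrite addr_ge0 ?normc_ge0.
pose K : R := 1 + S.
have eK : K - 1 = S by rewrite /K addrAC subrr add0r.
have hs : forall i j, normc (U i j) + normc (P i j) <= S.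
  move=> i j.
  have t1 := @le_sum_term R _ (fun j => normc (U i j) + normc (P i j)) j
    (fun j' => addr_ge0 (normc_ge0 _) (normc_ge0 _)).
  have t2 := @le_sum_term R _ (fun i => \sum_j (normc (U i j) + normc (P i j))) i
    (fun i' => sumr_ge0 _ (fun j' _ => addr_ge0 (normc_ge0 _) (normc_ge0 _))).
  exact: le_trans t1 t2.
have hU : forall i j, normc (U i j) <= K - 1.
  by move=> i j; rewrite eK; apply: le_trans (hs i j); rewrite lerDl normc_ge0.
have hP : forall i j, normc (P i j) <= K.
  move=> i j; apply: le_trans (_ : S <= K); last by rewrite /K lerDr.
  by apply: le_trans (hs i j); rewrite lerDr normc_ge0.
have K1 : 1 <= K by rewrite /K lerDl.
pose M : R := 2 * K ^+ 2 * ((n * n)%:R + 1).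
have M0 : 0 < M.
  by rewrite /M !mulr_gt0 // ?exprn_gt0 ?(lt_le_trans ltr01 K1) // ltr_wpDl.
exists (Num.min 1 (e / M)).
  by rewrite lt_min ltr01 divr_gt0.
move=> W hW i j.
have dl1 : Num.min 1 (e / M) <= 1 by rewrite ge_min lexx.
have dlM : Num.min 1 (e / M) <= e / M by rewrite ge_min lexx orbT.
set dl := Num.min 1 (e / M) in hW dl1 dlM *.
have hd : forall i j, normc (U i j - W i j) < dl.
  by move=> a b; have := hW a b; rewrite normcC ltcR.
have hW' : forall i j, normc (W i j) <= K.
  move=> a b; apply: le_trans (normcB_le (W a b) (U a b)) _.
  rewrite -[W a b - U a b]opprB normcN.
  have := hU a b; have := hd a b; lra.
have hterm : forall k l, normc (Num.conj_op (U k i) * P k l * U l j -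
     Num.conj_op (W k i) * P k l * W l j) <= 2 * K ^+ 2 * dl.
  move=> k l.
  have -> : Num.conj_op (U k i) * P k l * U l j -
     Num.conj_op (W k i) * P k l * W l j =
     Num.conj_op (U k i - W k i) * P k l * U l j +
     Num.conj_op (W k i) * P k l * (U l j - W l j).
    by rewrite rmorphB /=; ring.
  apply: le_trans (le_normcD _ _) _; rewrite !normcM !normcJ'.
  have a1 := hd k i; have a2 := hd l j; have a3 := hP k l.
  have a4 := hU l j; have a5 := hW' k i.
  have b1 := normc_ge0 (U k i - W k i); have b2 := normc_ge0 (P k l).
  have b3 := normc_ge0 (U l j); have b4 := normc_ge0 (W k i).
  have b5 := normc_ge0 (U l j - W l j).
  set x1 := normc (U k i - W k i) in a1 b1 *.
  set x2 := normc (U l j - W l j) in a2 b5 *.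
  set p := normc (P k l) in a3 b2 *.
  set u := normc (U l j) in a4 b3 *.
  set w := normc (W k i) in a5 b4 *.
  have c1 : x1 * p * u <= dl * K * K.
    apply: ler_pM; [exact: mulr_ge0|by []| |lra].
    apply: ler_pM => //; lra.
  have c2 : w * p * x2 <= K * K * dl.
    apply: ler_pM; [exact: mulr_ge0|by []| |lra].
    by apply: ler_pM.
  lra.
rewrite normcC ltcR !entry_expand -sumrB.
have hl : forall l : 'I_n, normc (\sum_k Num.conj_op (U k i) * P k l * U l j -
    \sum_k Num.conj_op (W k i) * P k l * W l j) <= (2 * K ^+ 2 * dl) *+ n.
  move=> l; rewrite -sumrB; apply: le_trans (normc_sum _) _.
  apply: le_trans (ler_sum _ (fun k _ => hterm k l)) _.
  by rewrite sumr_const card_ord.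
apply: le_lt_trans (normc_sum _) _.
apply: le_lt_trans (ler_sum _ (fun l _ => hl l)) _.
rewrite sumr_const card_ord -mulrnA -[_ *+ (n * n)]mulr_natr.
have dl0 : 0 < dl by rewrite /dl lt_min ltr01 divr_gt0.
have hdM : dl * M <= e by rewrite -ler_pdivlMr.
have K0 : 0 < K by apply: lt_le_trans K1.
have c0 : 0 < 2 * K ^+ 2 * dl by rewrite !mulr_gt0 // exprn_gt0.
apply: lt_le_trans hdM; rewrite /M.
set N := (n * n)%:R; set c := 2 * K ^+ 2 * dl in c0 *.
have -> : dl * (2 * K ^+ 2 * (N + 1)) = c * N + c by rewrite /c; ring.
by rewrite ltrDl.
Qed.
Lemma Minf_conj (R : realType) n (G Ps : set 'M[R[i]]_n) (U P : 'M[R[i]]_n) :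
  universal G -> Ps P -> unitary U -> Minf G Ps (adj U *m P *m U).
Proof.
move=> hG hP hU e e0.
have [dl dl0 hc] := conj_cont U P e0.
have [N [w hw <-] hN] := hG U hU dl dl0.
exists (adj (wprod w) *m P *m wprod w); last exact: hc.
exists (size w) => //.
exists P, (wprod w); split => //.
by exists w; split.
Qed.
Lemma ln_nat_le (R : realType) (p q : nat) : (1 <= p)%N -> (p <= q)%N ->
  ln (p%:R : R) <= ln (q%:R).
Proof.
move=> h1 h2; have q0 : (0 < q)%N := leq_trans h1 h2.
by rewrite ler_ln ?posrE ?ltr0n ?ler_nat.
Qed.

Lemma gap_ge (R : realType) n (Ps : set 'M[R[i]]_n) (a b : nat) :
  (1 <= a)%N -> (a <= b)%N -> (b <= n)%N ->
  (forall P, Ps P -> exists k : nat,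
     complex.Re (\tr P) = k%:R /\ ((k <= a)%N \/ (b <= k)%N)) ->
  ln (b%:R : R) - ln (a%:R) <= gap Ps.
Proof.
move=> ha hab hbn hP.
have lna0 : 0 <= ln (a%:R : R) by apply: ln_ge0; rewrite ler1n.
have lnbn : ln (b%:R : R) <= ln (n%:R) by apply: ln_nat_le => //; exact: leq_trans ha hab.
have lnab : ln (a%:R : R) <= ln (b%:R) by apply: ln_nat_le.
rewrite /gap; set E := (X in sup X).
have Ez : E (ln (b%:R : R) - ln (a%:R)).
  exists (ln a%:R), (ln b%:R); split => // x /andP[h1 h2]; split.
    by apply/andP; split; lra.
  move=> [P PP hx].
  have [k [hk hk2]] := hP P PP.
  move: hx; rewrite hk.
  have [->|k0] := eqVneq k 0%N; first by rewrite ln0 //; lra.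
  have k1 : (1 <= k)%N by rewrite lt0n.
  case: hk2 => hk2.
    by have := ln_nat_le R k1 hk2; lra.
  by have := ln_nat_le R (leq_trans ha hab) hk2; lra.
apply: (sup_upper_bound _ Ez); split; first by exists (ln b%:R - ln a%:R).
exists (ln (n%:R : R)) => y [a' [b' [-> H]]].
have n0 : 0 <= ln (n%:R : R) by apply: ln_ge0; rewrite ler1n (leq_trans ha (leq_trans hab hbn)).
have [hle|hlt] := leP (b' - a') (ln n%:R) => //.
exfalso.
pose eps := (b' - a' - ln n%:R) / 4.
have e1 : eps * 4 = b' - a' - ln n%:R by rewrite /eps divfK // pnatr_eq0.
have ep : 0 < eps by rewrite /eps divr_gt0 //; lra.
have i1 : a' < a' + eps < b' by apply/andP; split; lra.
have i2 : a' < b' - eps < b' by apply/andP; split; lra.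
have [/andP[x10 _] _] := H _ i1.
have [/andP[_ x2n] _] := H _ i2.
lra.
Qed.

Unset Implicit Arguments.
Set Strict Implicit.
Theorem propositionI4 (R : realType) (d : nat) (G Ps : set 'M[R[i]]_d) :
  (0 < d)%N ->
  (forall U, G U -> unitary U) ->
  G 1%:M ->
  universal G ->
  (forall P, Ps P -> projector P) ->
  Ps 1%:M ->
  (exists2 P, Ps P & \rank P = 1%N) ->
  quasiuniversal (gap Ps) (Minf G Ps) 1%:M.
Proof.
move=> d0 _ _ hGU hPs hP1 [P1 hP1s hr1].
move=> Q [hQpsd hQle] hQn g hg.
have [S [lam [h1 h2 hr eQ]]] := herm_decomp hQpsd.1.
have hQe : effect (cdiag S lam) by rewrite -eQ.
have hb := eig_bounds h1 h2 hQe.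
have hQn' : opnorm (cdiag S lam) = 1 by rewrite -eQ.
have [i0 hi0] := exists_big_eig h1 h2 hQe hQn' hg.
pose L := [set i : 'I_d | g%:C%C <= lam 0 i]%SET.
pose m := #|L|.
have m1 : (1 <= m)%N by rewrite /m card_gt0; apply/set0Pn; exists i0; rewrite inE.
have md : (m <= d)%N by rewrite /m; have := max_card (mem L); rewrite card_ord.
pose K := fun k : nat => exists2 P, Ps P & exists (V : 'M[R[i]]_d) (B : {set 'I_d}),
   [/\ V *m adj V = 1%:M, adj V *m V = 1%:M, P = cdiag V (ind R B) & #|B| = k].
have Kall : forall P, Ps P -> exists k, K k /\ complex.Re (\tr P) = k%:R.
  move=> P hP; have [V [B [v1 v2 eP]]] := proj_decomp (hPs P hP).
  exists #|B|; split; first by exists P => //; exists V, B.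
  by rewrite eP tr_cdiag.
have K1 : K 1%N.
  have [V [B [v1 v2 eP]]] := proj_decomp (hPs P1 hP1s).
  exists P1 => //; exists V, B; split => //.
  by rewrite -(rank_cdiag B v1 v2) -eP.
have Kd : K d.
  have hp1 : projector (1%:M : 'M[R[i]]_d).
    by split; rewrite ?mulmx1 // /adj map_mx1 trmx1.
  have [V [B [v1 v2 eP]]] := proj_decomp hp1.
  exists 1%:M => //; exists V, B; split => //.
  by rewrite -(rank_cdiag B v1 v2) -eP mxrank1.
pose pa := fun k => `[< K k >] && (k <= m)%N.
have exa : exists k, pa k by exists 1%N; rewrite /pa m1 andbT; apply/asboolP.
have uba : forall k, pa k -> (k <= m)%N by move=> k /andP[].
case: (ex_maxnP exa uba) => a /andP[/asboolP Ka am] amax.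
pose pb := fun k => `[< K k >] && (m <= k)%N.
have exb : exists k, pb k by exists d; rewrite /pb md andbT; apply/asboolP.
case: (ex_minnP exb) => b /andP[/asboolP Kb mb] bmin.
have a1 : (1 <= a)%N by apply: amax; rewrite /pa m1 andbT; apply/asboolP.
have bd : (b <= d)%N by apply: bmin; rewrite /pb md andbT; apply/asboolP.
have [A [AL cA]] := subset_card am.
have dT : (b <= #|'I_d|)%N by rewrite card_ord.
have [A' [LA' cA']] := superset_card mb dT.
move: Ka => [Pa hPa [Va [Ba [va1 va2 ePa cBa]]]].
move: Kb => [Pb hPb [Vb [Bb [vb1 vb2 ePb cBb]]]].
have [Ua [hUa eUa]] := conj_equiv h1 h2 va1 va2 (etrans cA (esym cBa)).
have [Ub [hUb eUb]] := conj_equiv h1 h2 vb1 vb2 (etrans cA' (esym cBb)).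
exists (cdiag S (ind R A)), (cdiag S (ind R A')); split.
- split.
    by rewrite -eUa -ePa; apply: Minf_conj.
  by rewrite -eUb -ePb; apply: Minf_conj.
- rewrite eQ /loewner cdiagZ cdiagB; apply: psd_cdiag => i; rewrite !mxE.
  have [l0 _] := hb i.
  case: (boolP (i \in A)) => iA; last by rewrite mulr0 subr0.
  move/fintype.subsetP: AL => /(_ i iA); rewrite inE => giL.
  by rewrite mulr1 subr_ge0.
- rewrite eQ /loewner -(cdiag1 h2) !cdiagZ cdiagD cdiagB.
  apply: psd_cdiag => i; rewrite !mxE mulr1.
  have [l0 l1] := hb i.
  case: (boolP (i \in A')) => iA.
    by rewrite mulr1 rmorphB rmorph1 /= subrK subr_ge0.
  rewrite mulr0 add0r subr_ge0.
  have iL : i \notin L by apply: contra iA => iL; move/fintype.subsetP: LA' => /(_ i iL).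
  move: iL; rewrite inE.
  have hrl : lam 0 i \is Num.real := ger0_real l0.
  have hg' : (g%:C%C : R[i]) \is Num.real.
    by apply: ger0_real; rewrite ler0c; case/andP: hg => /ltW.
  by rewrite (real_leNgt hg' hrl) negbK => /ltW.
- by rewrite mulmx1 tr_cdiag // cA ltr0n.
- rewrite !mulmx1 !tr_cdiag // cA cA'.
  apply: gap_ge => //; first exact: leq_trans am mb.
  move=> P hP; have [k [Kk ->]] := Kall P hP; exists k; split => //.
  case: (leqP k m) => hkm.
    by left; apply: amax; rewrite /pa hkm andbT; apply/asboolP.
  by right; apply: bmin; rewrite /pb (ltnW hkm) andbT; apply/asboolP.
Qed.
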